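(* Let $R\ge1$, $\mathbf{x}$ a vector of pairwise distinct reals, $\mathbf{c}\in\mathbb{R}^R$, $B=B(\mathbf{x},\mathbf{c})$, and let $\mathbf{u}=\mathbf{v}+i\mathbf{w}$ (with $\mathbf{v},\mathbf{w}\in\mathbb{R}^R$) be an eigenvector of $B$ for the eigenvalue $i\mu$, $\mu\in\mathbb{R}$. Then for every $1\le n\le R$, $$\mu^2v_n^2=\sum_{m=1}^R b_{n,m}^2w_m^2+2c_n^2\sum_{\substack{1\le m\le R\\ m\ne n}} a_{n,m}\,w_m\,(\mu v_m-b_{m,n}w_n).$$ Moreover, if $\mu\ne0$ then $\Vert\mathbf{v}\Vert=\Vert\mathbf{w}\Vert$; if $\mu=0$ then $\det B=0$ and the kernel of $B$ contains a nonzero real vector.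
   Context: $a_{m,m}=0$ and $a_{m,n}=\frac{1}{x_m-x_n}$ for $m\ne n$; $B(\mathbf{x},\mathbf{c})$ is the $R\times R$ matrix with entries $b_{m,n}=c_mc_na_{m,n}$. $\Vert\cdot\Vert$ is the Euclidean norm. *)

(* Defs.v *)
(* Complex numbers are modelled by an arbitrary
   numClosedFieldType C (e.g. algebraically closed field with conjugation,
   containing the reals as its Num.real elements). *)
From HB Require Import structures.
From mathcomp Require Import all_boot all_order all_algebra.
Set Implicit Arguments. Unset Strict Implicit. Unset Printing Implicit Defensive.
Import Order.TTheory GRing.Theory Num.Theory.
Local Open Scope ring_scope.

Definition Amat (C : numClosedFieldType) (r : nat) (x : 'I_r -> C) : 'M[C]_r :=
  \matrix_(m < r, n < r) (if m == n then 0 else (x m - x n)^-1).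

Definition Bmat (C : numClosedFieldType) (r : nat) (x c : 'I_r -> C) : 'M[C]_r :=
  \matrix_(m < r, n < r) (c m * c n * Amat x m n).

Definition enorm (C : numClosedFieldType) (r : nat) (v : 'I_r -> C) : C :=
  sqrtC (\sum_(m < r) `|v m| ^+ 2).

(* Main.v *)
Require Import Defs.
From HB Require Import structures.
From mathcomp Require Import all_boot all_order all_algebra.
From mathcomp Require Import ring.
Import Order.TTheory GRing.Theory Num.Theory.
Local Open Scope ring_scope.

Section L.
Context {C : numClosedFieldType} {r : nat} {x c : 'I_r -> C}.

Lemma AE i j : Amat x i j = if i == j then 0 else (x i - x j)^-1.
Proof. by rewrite /Amat mxE. Qed.
Lemma BE i j : Bmat x c i j = c i * c j * Amat x i j.
Proof. by rewrite /Bmat mxE. Qed.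
Lemma A_real (xR : forall i, x i \is Num.real) i j : Amat x i j \is Num.real.
Proof. rewrite AE; case: eqP => _; [exact: rpred0| by rewrite rpredV rpredB]. Qed.
Lemma B_real (xR : forall i, x i \is Num.real) (cR : forall i, c i \is Num.real) i j :
  Bmat x c i j \is Num.real.
Proof. by rewrite BE !rpredM // A_real. Qed.
Lemma A_skew i j : Amat x j i = - Amat x i j.
Proof. rewrite !AE eq_sym; case: eqP => _; first by rewrite oppr0. by rewrite -invrN opprB. Qed.
Lemma B_skew i j : Bmat x c j i = - Bmat x c i j.
Proof. by rewrite !BE A_skew mulrN [c j * _]mulrC. Qed.
Lemma A_diag i : Amat x i i = 0. Proof. by rewrite AE eqxx. Qed.
Lemma B_diag i : Bmat x c i i = 0. Proof. by rewrite BE A_diag mulr0. Qed.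
Lemma xsub_neq0 (xinj : injective x) {i j} : i != j -> x i - x j != 0.
Proof. move=> ij; rewrite subr_eq0; apply: contra ij => /eqP/xinj ->. done. Qed.
Lemma A_id (xinj : injective x) {n m k} : n != m -> m != k -> n != k ->
  Amat x n m * Amat x m k + Amat x n k * Amat x k m = Amat x n m * Amat x n k.
Proof.
move=> nm mk nk; have km : k != m by rewrite eq_sym.
rewrite !AE (negbTE nm) (negbTE mk) (negbTE nk) (negbTE km).
have h1 := xsub_neq0 xinj nm; have h2 := xsub_neq0 xinj mk; have h3 := xsub_neq0 xinj nk.
have h4 := xsub_neq0 xinj km.
field; rewrite ?h1 ?h2 ?h3 ?h4 //.
Qed.

Definition Gf (w : 'I_r -> C) n m k :=
  if k == n then 0 else c n ^+ 2 * (Amat x n m * Bmat x c m k) * w m * w k.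

Lemma Q (xinj : injective x) (w : 'I_r -> C) n m k :
  Bmat x c n m * Bmat x c n k * w m * w k =
  (if k == m then Bmat x c n m ^+ 2 * w m ^+ 2 else 0) + Gf w n m k + Gf w n k m.
Proof.
rewrite /Gf; case: (eqVneq k m) => [->|km].
  by rewrite B_diag; case: (m == n); ring.
case: (eqVneq m n) => [emn|mn].
  subst m; by rewrite ?eqxx ?(negbTE km) !B_diag A_diag; ring.
case: (eqVneq k n) => [ekn|kn].
  subst k;
  by rewrite ?eqxx ?(negbTE mn) !B_diag A_diag; ring.
have nm : n != m by rewrite eq_sym.
have mk : m != k by rewrite eq_sym.
have nk : n != k by rewrite eq_sym.
have H := A_id xinj nm mk nk.
rewrite !BE.
transitivity (c n ^+2 * c m * c k * w m * w k * (Amat x n m * Amat x n k)); first ring.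
rewrite -H A_skew; ring.
Qed.
End L.

Theorem lemma6 (C : numClosedFieldType) (r : nat) (x c : 'I_r -> C)
    (u : 'cV[C]_r) (mu : C) :
  (0 < r)%N ->
  injective x ->
  (forall i, x i \is Num.real) ->
  (forall i, c i \is Num.real) ->
  mu \is Num.real ->
  u != 0 ->
  Bmat x c *m u = ('i * mu) *: u ->
  let v := fun m => 'Re (u m 0) in
  let w := fun m => 'Im (u m 0) in
  (forall n : 'I_r,
      mu ^+ 2 * v n ^+ 2
      = \sum_(m < r) (Bmat x c n m) ^+ 2 * w m ^+ 2
        + 2 * c n ^+ 2 * \sum_(m < r | m != n)
              Amat x n m * w m * (mu * v m - Bmat x c m n * w n))
  /\ (mu != 0 -> enorm v = enorm w)
  /\ (mu = 0 -> \det (Bmat x c) = 0 /\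
        exists z : 'cV[C]_r, z != 0 /\ (forall i, z i 0 \is Num.real)
                              /\ Bmat x c *m z = 0).
Proof.
move=> r0 xinj xR cR muR u0 Hu v w.
have BR := B_real xR cR.
have Hn n : \sum_j Bmat x c n j * u j 0 = 'i * mu * u n 0.
  by have := congr1 (fun M : 'M[C]_(r,1) => M n 0) Hu; rewrite !mxE.
have E1 n : \sum_j Bmat x c n j * v j = - (mu * w n).
  have := congr1 (fun z => 'Re z) (Hn n).
  rewrite raddf_sum -mulrA ReMil (ImMl muR) => <-.
  by apply: eq_bigr => j _; symmetry; exact: (ReMl (BR n j) (u j 0)).
have E2 n : \sum_j Bmat x c n j * w j = mu * v n.
  have := congr1 (fun z => 'Im z) (Hn n).
  rewrite raddf_sum -mulrA ImMil (ReMl muR) => <-.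
  by apply: eq_bigr => j _; symmetry; exact: (ImMl (BR n j) (u j 0)).
split.
  move=> n.
  have -> : mu ^+ 2 * v n ^+ 2 = (\sum_j Bmat x c n j * w j) ^+ 2 by rewrite E2 exprMn.
  rewrite expr2 big_distrl /=.
  under eq_bigr do rewrite big_distrr /=.
  have HQ m k : Bmat x c n m * w m * (Bmat x c n k * w k) =
     (if k == m then Bmat x c n m ^+ 2 * w m ^+ 2 else 0)
                 + @Gf C r x c w n m k + @Gf C r x c w n k m.
    by rewrite -Q //; ring.
  under eq_bigr => m _ do under eq_bigr => k _ do rewrite HQ.
  under eq_bigr => m _ do rewrite !big_split /=.
  rewrite !big_split /=.
  have D : \sum_m \sum_k (if k == m then Bmat x c n m ^+ 2 * w m ^+ 2 else 0)
      = \sum_m Bmat x c n m ^+ 2 * w m ^+ 2.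
    apply: eq_bigr => m _; rewrite (bigD1 m) //= eqxx big1 ?addr0 // => k /negbTE -> //.
  have HG : \sum_m \sum_k @Gf C r x c w n m k = c n ^+ 2 * \sum_(m | m != n)
              Amat x n m * w m * (mu * v m - Bmat x c m n * w n).
    rewrite [in RHS]big_mkcond big_distrr /=.
    apply: eq_bigr => m _.
    case: (eqVneq m n) => [emn|mn].
      subst m; rewrite mulr0 big1 // => k _; rewrite /Gf A_diag; case: ifP => _; ring.
    rewrite -(E2 m) (bigD1 n) //= [in RHS](bigD1 n) //= /Gf eqxx add0r.
    rewrite addrC addrK mulr_sumr mulr_sumr; apply: eq_bigr => k /negbTE kn.
    rewrite kn; ring.
  rewrite D (exchange_big _ _ _ _ _ (fun m k => @Gf C r x c w n k m)) /= HG; ring.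
split.
  move=> mu0.
  have K : \sum_n v n * (\sum_j Bmat x c n j * w j)
         = - \sum_n w n * (\sum_j Bmat x c n j * v j).
    under eq_bigr => i _ do rewrite big_distrr /=.
    under [in RHS]eq_bigr => i _ do rewrite big_distrr /=.
    rewrite exchange_big -sumrN; apply: eq_bigr => j _.
    rewrite -sumrN; apply: eq_bigr => i _; rewrite (B_skew i j); ring.
  have K2 : mu * \sum_n v n ^+ 2 = mu * \sum_n w n ^+ 2.
    rewrite !mulr_sumr.
    transitivity (\sum_n v n * (\sum_j Bmat x c n j * w j)).
      by apply: eq_bigr => i _; rewrite E2; ring.
    rewrite K -sumrN; apply: eq_bigr => i _; rewrite E1; ring.
  have K3 := mulfI mu0 K2.
  rewrite /enorm; congr sqrtC.
  transitivity (\sum_n v n ^+ 2).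
    by apply: eq_bigr => i _; rewrite real_normK // Creal_Re.
  by rewrite K3; apply: eq_bigr => i _; rewrite real_normK // Creal_Im.
move=> mu0.
have Bu0 : Bmat x c *m u = 0 by rewrite Hu mu0 mulr0 scale0r.
split.
  case: (boolP (Bmat x c \in unitmx)) => Bu.
    by move: u0; rewrite -(mulKmx Bu u) Bu0 mulmx0 eqxx.
  by move: Bu; rewrite unitmxE unitfE negbK => /eqP.
have Bz (f : 'I_r -> C) : (forall n, \sum_j Bmat x c n j * f j = 0) ->
    Bmat x c *m (\col_i f i) = 0.
  move=> H; apply/matrixP => i j; rewrite !mxE -[RHS](H i).
  by apply: eq_bigr => k _; rewrite ?mxE.
case: (eqVneq (\col_i v i) 0) => [hv|hv]; last first.
  exists (\col_i v i); split => //; split.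
    by move=> i; rewrite mxE Creal_Re.
  by apply: Bz => n; rewrite E1 mu0 mul0r oppr0.
exists (\col_i w i); split; last split.
- apply/negP => /eqP hw; move/eqP: u0; apply; apply/matrixP => i j.
  have h1 := congr1 (fun M : 'M[C]_(r,1) => M i 0) hv.
  have h2 := congr1 (fun M : 'M[C]_(r,1) => M i 0) hw.
  move: h1 h2; rewrite !mxE /v /w => h1 h2.
  by rewrite ord1 (Crect (u i 0)) h1 h2 mulr0 addr0.
- by move=> i; rewrite mxE Creal_Im.
- by apply: Bz => n; rewrite E2 mu0 mul0r.
Qed.
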